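(* Let $S$ be a multiplicatively closed subset of an $r$-lattice $L$ (with $1\in S$, $0\notin S$). Then: (1) if $j$ is a principal element and $i$ is an $S$-compact element of $L$, then $i\cdot j$ is $S$-compact; (2) if $k$ is a compact element and $i$ is an $S$-compact element of $L$, then $k\vee i$ is $S$-compact.
   Context: A multiplicative lattice is a complete lattice with a commutative, associative multiplication distributing over arbitrary joins, with $1$ as identity; $L_*$ is the set of compact elements; $(a:b)=\bigvee\{x\mid xb\le a\}$. An element $m$ is principal if $a\wedge mb=m((a:m)\wedge b)$ and $a\vee(b:m)=(am\vee b):m$ for all $a,b$. An $r$-lattice is a modular, principally generated, compactly generated multiplicative lattice with $1$ compact. A multiplicatively closed subset is a nonempty $S\subseteq L_*$ closed under multiplication. An element $a$ is $S$-compact if there exist a compact $b$ and $s\in S$ with $s\cdot a\le b\le a$. *)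

(* Defs.v *)
From Stdlib Require Import List.
Set Implicit Arguments.

(* A multiplicative lattice: a complete lattice (order [le], arbitrary joins
   [sup] of Prop-valued subsets) with a commutative, associative
   multiplication distributing over arbitrary joins, whose greatest element
   1 (= sup of everything) is the multiplicative identity. *)
Record MultLattice := {
  carrier :> Type;
  le : carrier -> carrier -> Prop;
  le_refl : forall a, le a a;
  le_trans : forall a b c, le a b -> le b c -> le a c;
  le_antisym : forall a b, le a b -> le b a -> a = b;
  sup : (carrier -> Prop) -> carrier;
  sup_ub : forall (A : carrier -> Prop) x, A x -> le x (sup A);
  sup_least : forall (A : carrier -> Prop) y,
      (forall x, A x -> le x y) -> le (sup A) y;
  mul : carrier -> carrier -> carrier;
  mul_comm : forall a b, mul a b = mul b a;
  mul_assoc : forall a b c, mul a (mul b c) = mul (mul a b) c;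
  mul_one : forall a, mul (sup (fun _ => True)) a = a;
  mul_sup : forall a (A : carrier -> Prop),
      mul a (sup A) = sup (fun y => exists x, A x /\ y = mul a x)
}.

Arguments le {m}.
Arguments sup {m}.
Arguments mul {m}.

Section Ops.
Variable L : MultLattice.

Definition one : L := sup (fun _ => True).
Definition zero : L := sup (fun _ => False).
Definition join (a b : L) : L := sup (fun x => x = a \/ x = b).
Definition meet (a b : L) : L := sup (fun x => le x a /\ le x b).
Definition res (a b : L) : L := sup (fun x => le (mul x b) a).

Definition compact (a : L) : Prop :=
  forall A : L -> Prop, le a (sup A) ->
    exists l : list L, (forall x, In x l -> A x) /\ le a (sup (fun x => In x l)).

Definition principal (m : L) : Prop :=
  forall a b : L,
    meet a (mul m b) = mul m (meet (res a m) b) /\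
    join a (res b m) = res (join (mul a m) b) m.

Definition modular : Prop :=
  forall a b c : L, le a c -> join a (meet b c) = meet (join a b) c.

Definition principally_generated : Prop :=
  forall a : L, a = sup (fun x => principal x /\ le x a).

Definition compactly_generated : Prop :=
  forall a : L, a = sup (fun x => compact x /\ le x a).

Definition r_lattice : Prop :=
  modular /\ principally_generated /\ compactly_generated /\ compact one.

Definition mult_closed (S : L -> Prop) : Prop :=
  (exists s, S s) /\ (forall s, S s -> compact s) /\
  (forall s t, S s -> S t -> S (mul s t)).

Definition S_compact (S : L -> Prop) (a : L) : Prop :=
  exists b s, compact b /\ S s /\ le (mul s a) b /\ le b a.

End Ops.
Arguments zero {L}.
Arguments one {L}.
Arguments join {L}.
Arguments meet {L}.
Arguments res {L}.
Arguments compact {L}.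
Arguments principal {L}.
Arguments mult_closed {L}.
Arguments S_compact {L}.

(* Main.v *)
Require Import Defs.
From Stdlib Require Import List.

Lemma sup_in {L : MultLattice} (x : L) l : In x l -> le x (sup (fun y => In y l)).
Proof. intro H. apply sup_ub. exact H. Qed.

Lemma sup_sub {L : MultLattice} (A B : L -> Prop) : (forall x, A x -> B x) -> le (sup A) (sup B).
Proof. intro H. apply sup_least. intros x Hx. apply sup_ub. auto. Qed.

Lemma sup_self {L : MultLattice} (b : L) : sup (fun x => le x b) = b.
Proof.
  apply le_antisym. apply sup_least; auto. apply sup_ub. apply le_refl.
Qed.

Lemma mul_mono_r {L : MultLattice} (a b c : L) : le a b -> le (mul c a) (mul c b).
Proof.
  intro H. rewrite <- (sup_self b). rewrite mul_sup. apply sup_ub. exists a; split; auto.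
Qed.

Lemma mul_mono_l {L : MultLattice} (a b c : L) : le a b -> le (mul a c) (mul b c).
Proof. intro H. rewrite (mul_comm _ a), (mul_comm _ b). apply mul_mono_r; auto. Qed.

Lemma res_mono {L : MultLattice} (a a' j : L) : le a a' -> le (res a j) (res a' j).
Proof.
  intro H. unfold res. apply sup_least. intros x Hx. apply sup_ub. eapply le_trans; eauto.
Qed.

Lemma res_mul {L : MultLattice} (a j : L) : le (mul (res a j) j) a.
Proof.
  unfold res. rewrite mul_comm, mul_sup. apply sup_least.
  intros y [x [Hx ->]]. rewrite mul_comm. exact Hx.
Qed.

Lemma le_res {L : MultLattice} (x a j : L) : le (mul x j) a -> le x (res a j).
Proof. intro H. unfold res. apply sup_ub. exact H. Qed.

Lemma meet_lb1 {L : MultLattice} (a b : L) : le (meet a b) a.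
Proof. unfold meet. apply sup_least. intros x [H _]; auto. Qed.
Lemma meet_lb2 {L : MultLattice} (a b : L) : le (meet a b) b.
Proof. unfold meet. apply sup_least. intros x [_ H]; auto. Qed.
Lemma le_meet {L : MultLattice} (x a b : L) : le x a -> le x b -> le x (meet a b).
Proof. intros. unfold meet. apply sup_ub. auto. Qed.

Lemma join_ub1 {L : MultLattice} (a b : L) : le a (join a b).
Proof. unfold join. apply sup_ub. auto. Qed.
Lemma join_ub2 {L : MultLattice} (a b : L) : le b (join a b).
Proof. unfold join. apply sup_ub. auto. Qed.
Lemma join_least {L : MultLattice} (a b c : L) : le a c -> le b c -> le (join a b) c.
Proof. intros. unfold join. apply sup_least. intros x [->| ->]; auto. Qed.

Lemma zero_le {L : MultLattice} (a : L) : le zero a.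
Proof. unfold zero. apply sup_least. intros x []. Qed.
Lemma le_one {L : MultLattice} (a : L) : le a one.
Proof. unfold one. apply sup_ub. exact I. Qed.

Lemma mul_le_self {L : MultLattice} (s a : L) : le (mul s a) a.
Proof.
  eapply le_trans. apply mul_mono_l. apply (le_one s). unfold one. rewrite mul_one. apply le_refl.
Qed.

Lemma join_compact {L : MultLattice} (k b : L) : compact k -> compact b -> compact (join k b).
Proof.
  intros Hk Hb A H.
  destruct (Hk A) as [l1 [H1 H1']]. eapply le_trans; [apply join_ub1|exact H].
  destruct (Hb A) as [l2 [H2 H2']]. eapply le_trans; [apply join_ub2|exact H].
  exists (l1 ++ l2). split.
  - intros x Hx. apply in_app_or in Hx. destruct Hx; auto.
  - apply join_least.
    + eapply le_trans; [exact H1'|]. apply sup_sub. intros; apply in_or_app; auto.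
    + eapply le_trans; [exact H2'|]. apply sup_sub. intros; apply in_or_app; auto.
Qed.

Lemma prod_compact {L : MultLattice} (b j : L) :
  compactly_generated L -> compact b -> principal j -> compact (mul b j).
Proof.
  intros CG Hb Hj A H.
  set (F := fun l : list L => sup (fun x => In x l)).
  set (Q' := fun z => exists l, (forall x, In x l -> A x) /\ z = meet (res (F l) j) b).
  set (Y := sup Q').
  assert (Step1 : le (mul j b) (mul j Y)).
  { rewrite (CG (mul j b)) at 1. apply sup_least. intros c [Hc Hcle].
    destruct (Hc A) as [l [Hl Hl']].
    { eapply le_trans; [exact Hcle|]. rewrite mul_comm. exact H. }
    apply le_trans with (meet (F l) (mul j b)).
    { apply le_meet; auto. }
    destruct (Hj (F l) b) as [E _]. rewrite E.
    apply mul_mono_r. unfold Y. apply sup_ub. exists l; auto. }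
  assert (Step2 : le b (join Y (res zero j))).
  { destruct (Hj Y zero) as [_ E]. rewrite E.
    apply le_res. eapply le_trans; [|apply join_ub1].
    rewrite (mul_comm _ b), (mul_comm _ Y). exact Step1. }
  destruct (Hb (fun z => Q' z \/ z = res zero j)) as [l0 [Hl0 Hl0']].
  { eapply le_trans; [exact Step2|]. apply join_least.
    - unfold Y. apply sup_sub. auto.
    - apply sup_ub. auto. }
  assert (Key : exists l, (forall x, In x l -> A x) /\
                 forall z, In z l0 -> le z (res (F l) j)).
  { clear Hl0'. induction l0 as [|z l0 IH].
    - exists nil. split; [intros x []|intros z []].
    - destruct IH as [l' [Hl' Hz']]. { intros x Hx. apply Hl0. right; auto. }
      destruct (Hl0 z (or_introl eq_refl)) as [[l [Hl ->]] | ->].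
      + exists (l ++ l'). split.
        * intros x Hx. apply in_app_or in Hx. destruct Hx; auto.
        * intros z [<-|Hz].
          -- eapply le_trans; [apply meet_lb1|]. apply res_mono. apply sup_sub.
             intros; apply in_or_app; auto.
          -- eapply le_trans; [apply Hz'; auto|]. apply res_mono. apply sup_sub.
             intros; apply in_or_app; auto.
      + exists l'. split; auto.
        intros z [<-|Hz]; auto. apply res_mono. apply zero_le. }
  destruct Key as [l [Hl Hz]]. exists l. split; auto.
  apply le_trans with (mul (res (F l) j) j); [|apply res_mul].
  apply mul_mono_l. eapply le_trans; [exact Hl0'|]. apply sup_least. auto.
Qed.

Theorem mainTheorem7 (L : MultLattice) (S : L -> Prop) :
  r_lattice L -> mult_closed S -> S one -> ~ S zero ->
  (forall i j : L, principal j -> S_compact S i -> S_compact S (mul i j)) /\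
  (forall k i : L, compact k -> S_compact S i -> S_compact S (join k i)).
Proof.
  intros [_ [_ [CG _]]] _ _ _. split.
  - intros i j Hj [b [s [Hb [Hs [H1 H2]]]]].
    exists (mul b j), s. repeat split; auto.
    + apply prod_compact; auto.
    + rewrite mul_assoc. apply mul_mono_l. exact H1.
    + apply mul_mono_l. exact H2.
  - intros k i Hk [b [s [Hb [Hs [H1 H2]]]]].
    exists (join k b), s. repeat split; auto.
    + apply join_compact; auto.
    + unfold join at 1. rewrite mul_sup. apply sup_least.
      intros y [x [[-> | ->] ->]].
      * eapply le_trans; [apply mul_le_self|apply join_ub1].
      * eapply le_trans; [exact H1|apply join_ub2].
    + apply join_least; [apply join_ub1|]. eapply le_trans; [exact H2|apply join_ub2].
Qed.
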